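(* For a finite graph $G$ on $n$ vertices, $\theta(G)=D(G)$ if and only if $G$ is asymmetric (i.e. $\mathrm{Aut}(G)=\{\mathrm{id}\}$), or $G\cong K_n$, or $G\cong\overline{K_n}$.
   Context: All graphs are finite and simple. A vertex coloring of $G$ is distinguishing if no non-identity automorphism of $G$ maps every vertex to a vertex of the same color. The distinguishing number $D(G)$ is the minimum number of colors in a distinguishing coloring of $G$. The distinguishing threshold $\theta(G)$ is the minimum $k$ such that every vertex coloring of $G$ using exactly $k$ colors is distinguishing; equivalently $\theta(G)=1+\max\{c(\alpha):\alpha\in\mathrm{Aut}(G)\}$, with $c(\alpha)$ the number of cycles of $\alpha$ (fixed points counted) and $c(\mathrm{id})=0$. *)

(* Defs.v *)
From mathcomp Require Import all_boot fingroup perm.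
Set Implicit Arguments. Unset Strict Implicit. Unset Printing Implicit Defensive.

(* A finite simple graph: vertex set T (finType), adjacency e symmetric and
   irreflexive (these are hypotheses of the theorem). *)

Definition is_aut (T : finType) (e : rel T) (s : {perm T}) : bool :=
  [forall x, forall y, e (s x) (s y) == e x y].

Definition asymmetric (T : finType) (e : rel T) : Prop :=
  forall s : {perm T}, is_aut e s -> s = 1%g.

Definition distinguishing (T : finType) (e : rel T) (k : nat)
    (c : {ffun T -> 'I_k}) : bool :=
  [forall s : {perm T}, (is_aut e s && [forall x, c (s x) == c x]) ==> (s == 1%g)].

Definition uses_all (T : finType) (k : nat) (c : {ffun T -> 'I_k}) : bool :=
  [forall i : 'I_k, exists x, c x == i].

Definition has_dist_coloring (T : finType) (e : rel T) : pred nat :=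
  fun k => (0 < k) && [exists c : {ffun T -> 'I_k}, distinguishing e c].

Definition threshold_ok (T : finType) (e : rel T) : pred nat :=
  fun k => (0 < k) &&
    [forall c : {ffun T -> 'I_k}, uses_all c ==> distinguishing e c].

Lemma has_dist_coloring_ex (T : finType) (e : rel T) :
  exists k, has_dist_coloring e k.
Proof.
exists #|T|.+1; apply/andP; split => //.
apply/existsP; exists [ffun x => inord (enum_rank x)].
apply/forallP => s; apply/implyP => /andP [_ /forallP H].
apply/eqP/permP => x; rewrite perm1.
have := H x; rewrite !ffunE => /eqP /(congr1 val) /=.
rewrite !inordK; last 2 first.
- by apply: ltnW; rewrite ltnS ltn_ord.
- by apply: ltnW; rewrite ltnS ltn_ord.
by move=> /val_inj /enum_rank_inj.
Qed.

Lemma threshold_ok_ex (T : finType) (e : rel T) :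
  exists k, threshold_ok e k.
Proof.
exists #|T|.+1; apply/andP; split => //.
apply/forallP => c; apply/implyP => /forallP Hs; exfalso.
have sub : [set: 'I_#|T|.+1] \subset [set y in codom c].
  apply/subsetP => i _; rewrite inE; have /existsP [x /eqP <-] := Hs i.
  exact: codom_f.
have := subset_leq_card sub; rewrite cardsT card_ord cardsE.
move=> H; have := leq_trans H (card_size _); rewrite size_codom.
by rewrite ltnn.
Qed.

Definition dist_number (T : finType) (e : rel T) : nat :=
  ex_minn (has_dist_coloring_ex e).

Definition dist_threshold (T : finType) (e : rel T) : nat :=
  ex_minn (threshold_ok_ex e).

Definition isomorphic_to (T : finType) (e : rel T) (n : nat) (r : rel 'I_n) : Prop :=
  exists f : T -> 'I_n, bijective f /\ forall x y, e x y = r (f x) (f y).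

Definition complete_rel (n : nat) : rel 'I_n := fun i j => i != j.
Definition empty_rel (n : nat) : rel 'I_n := fun _ _ => false.
Arguments complete_rel n : clear implicits.
Arguments empty_rel n : clear implicits.

(* Main.v *)
Require Import Defs.
From mathcomp Require Import all_boot fingroup perm.
From mathcomp Require Import zify.

Set Implicit Arguments. Unset Strict Implicit. Unset Printing Implicit Defensive.
Import GroupScope.

Lemma autP (T : finType) (e : rel T) (s : {perm T}) :
  reflect (forall x y, e (s x) (s y) = e x y) (is_aut e s).
Proof.
apply: (iffP forallP) => [H x y|H x]; first exact/eqP/(forallP (H x) y).
by apply/forallP => y; rewrite H.
Qed.

Lemma aut1 (T : finType) (e : rel T) : is_aut e 1.
Proof. by apply/autP => x y; rewrite !perm1. Qed.

Lemma autM (T : finType) (e : rel T) s t :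
  is_aut e s -> is_aut e t -> is_aut e (s * t).
Proof. by move=> /autP hs /autP ht; apply/autP => x y; rewrite !permM ht hs. Qed.

Lemma autV (T : finType) (e : rel T) s : is_aut e s -> is_aut e s^-1.
Proof. by move=> /autP hs; apply/autP => x y; rewrite -hs !permKV. Qed.

Lemma autX (T : finType) (e : rel T) s n : is_aut e s -> is_aut e (s ^+ n).
Proof.
move=> hs; elim: n => [|n IH]; first by rewrite expg0 aut1.
by rewrite expgS autM.
Qed.

Lemma distP (T : finType) (e : rel T) k (c : {ffun T -> 'I_k}) :
  reflect (forall s, is_aut e s -> (forall x, c (s x) = c x) -> s = 1)
          (distinguishing e c).
Proof.
apply: (iffP forallP) => [H s hs hc|H s].
  apply/eqP; move/implyP: (H s); apply; rewrite hs /=.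
  by apply/forallP => x; rewrite hc.
by apply/implyP => /andP[hs /forallP hc]; apply/eqP/H => // x; apply/eqP.
Qed.

Lemma ex_minn_eq (P : pred nat) (h : exists n, P n) m :
  P m -> (forall k, k < m -> ~~ P k) -> ex_minn h = m.
Proof.
move=> Pm H; case: ex_minnP => k Pk mk; apply/eqP; rewrite eqn_leq mk //=.
by rewrite leqNgt; apply/negP => km; move: (H k km); rewrite Pk.
Qed.

Lemma reflection (T : finType) (e : rel T) (esym : symmetric e) (s : {perm T}) x0
  (autS : is_aut e s) (tr : forall u, u \in porbit s x0)
  (F1 : forall r, is_aut e r -> r x0 = x0 -> r = 1) : s ^+ 2 = 1.
Proof.
have ex u : exists i, (s ^+ i) x0 == u by have /porbitP[i ->] := tr u; exists i.
pose a u := ex_minn (ex u).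
have aP u : (s ^+ a u) x0 = u by rewrite /a; case: ex_minnP => i /eqP.
pose f u := ((s ^+ a u)^-1) x0.
have finj : injective f.
  move=> u v; rewrite /f => H.
  have r1 : (s ^+ a u)^-1 * s ^+ a v = 1.
    apply: F1; first by rewrite autM ?autV ?autX.
    by rewrite permM H permKV.
  have : s ^+ a v = s ^+ a u.
    by rewrite -[s ^+ a v]mul1g -(mulgV (s ^+ a u)) -mulgA r1 mulg1.
  by rewrite -{2}(aP u) -{2}(aP v) => ->.
pose t := perm finj.
have autT : is_aut e t.
  apply/autP => u v; rewrite !permE /f.
  have /autP H := autX (a u + a v) autS.
  rewrite -H {1}expgD addnC expgD !permM !permKV !aP.
  exact: esym.
have t1 : t = 1.
  apply: F1 => //; rewrite permE /f.
  by apply: (canLR (permK _)); rewrite aP.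
pose b := a (s x0).
have sb : s ^+ b = s.
  have r1 : s ^+ b * s^-1 = 1.
    apply: F1; first by rewrite autM ?autV ?autX.
    by rewrite permM aP permK.
  by rewrite -[s ^+ b]mulg1 -(mulVg s) mulgA r1 mul1g.
have : t (s x0) = s x0 by rewrite t1 perm1.
rewrite permE /f -/b sb => H.
apply: F1; first exact: autX.
by rewrite expgS expg1 permM -H permKV.
Qed.

Lemma trans_lemma (T : finType) (e : rel T) m
 (HD : forall c : {ffun T -> 'I_m.+1}, ~~ distinguishing e c)
 (Hth : forall c : {ffun T -> 'I_m.+2}, uses_all c -> distinguishing e c)
 (L : seq T) (uL : uniq L) (sL : size L = m) :
 exists s : {perm T}, [/\ is_aut e s, s != 1, {in L, forall v, s v = v} &
   forall y z, y \notin L -> z \notin L -> z \in porbit s y].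
Proof.
pose c0 : {ffun T -> 'I_m.+1} :=
  [ffun v => inord (if v \in L then index v L else m)].
have /distP := HD c0.
case: (boolP [exists s : {perm T}, is_aut e s && (s != 1) &&
                 [forall x, c0 (s x) == c0 x]]); last first.
  rewrite negb_exists => /forallP H []. move=> s hs hc.
  apply/eqP; move: (H s); rewrite hs /=.
  have -> : [forall x, c0 (s x) == c0 x] by apply/forallP => x; rewrite hc.
  by rewrite andbT negbK.
move=> /existsP[s /andP[/andP[hs s1] /forallP hc]] _.
have val0 v : (c0 v : nat) = (if v \in L then index v L else m).
  rewrite ffunE inordK //; case: ifP => // vL.
  by rewrite ltnS -sL ltnW // index_mem.
have fixL : {in L, forall v, s v = v}.
  move=> v vL; have := eqP (hc v); move/(congr1 (@nat_of_ord _)); rewrite !val0 vL.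
  case: ifP => [svL|_].
    by move=> H; rewrite -(nth_index v svL) H nth_index.
  by move=> H; move: (index_mem v L); rewrite vL -H sL ltnn.
have notL v : v \notin L -> s v \notin L.
  move=> vL; apply/negP => svL.
  by move: vL; rewrite -(perm_inj (fixL _ svL)) svL.
exists s; split => // y z yL zL.
apply/negPn/negP => zy.
pose c1 : {ffun T -> 'I_m.+2} :=
  [ffun v => inord (if v \in L then index v L else if v \in porbit s y then m else m.+1)].
have val1 v : (c1 v : nat) = (if v \in L then index v L else if v \in porbit s y then m else m.+1).
  rewrite ffunE inordK //; case: ifP => [vL|_]; last by case: ifP.
  by have := index_mem v L; rewrite vL sL; lia.
have : distinguishing e c1.
  apply: Hth; apply/forallP => i; apply/existsP.
  case: (ltngtP i m) => [im|mi|im].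
  - exists (nth y L i); apply/eqP/ord_inj; rewrite val1 mem_nth ?sL //.
    by rewrite index_uniq ?sL.
  - exists z; apply/eqP/ord_inj; rewrite val1 (negbTE zL) (negbTE zy) /=.
    move: (ltn_ord i) mi; lia.
  - exists y; apply/eqP/ord_inj; rewrite val1 (negbTE yL) porbit_id /=; lia.
move/distP/(_ s hs) => H; move: s1; rewrite H ?eqxx // => v.
apply/ord_inj; rewrite !val1.
case: (boolP (v \in L)) => vL; first by rewrite fixL // vL.
rewrite (negbTE (notL _ vL)) ?(negbTE vL).
by rewrite porbit_sym -[s v]/((s ^+ 1) v) porbit_perm porbit_sym.
Qed.

Lemma step_lemma (T : finType) (e : rel T) (esym : symmetric e) m
 (HD : forall c : {ffun T -> 'I_m.+1}, ~~ distinguishing e c)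
 (Hth : forall c : {ffun T -> 'I_m.+2}, uses_all c -> distinguishing e c)
 (Hjn : m.+1 < #|T|) :
 forall x y z, y != x -> z != x -> e x y = e x z.
Proof.
move=> x y z yx zx; case: (eqVneq y z) => [->//|yz].
case: m HD Hth Hjn => [|m] HD Hth Hjn.
  have [s [hs s1 _ tr]] := trans_lemma HD Hth (L := [::]) erefl erefl.
  have tr' u : u \in porbit s x by apply: tr.
  have F1 r : is_aut e r -> r x = x -> r = 1.
    move=> hr rx; pose c : {ffun T -> 'I_2} := [ffun v => inord (v != x)].
    have hd : distinguishing e c.
      apply: Hth; apply/forallP => i; apply/existsP.
      case: i => [[|[|i]] hi] //.
        by exists x; apply/eqP/ord_inj; rewrite ffunE inordK // eqxx.
      by exists y; apply/eqP/ord_inj; rewrite ffunE inordK // yx.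
    move/distP: hd; apply => // v.
    apply/ord_inj; rewrite !ffunE /= !inordK; try by case: (_ != _).
    by rewrite -{1}rx (inj_eq perm_inj).
  have s2 := reflection esym hs tr' F1.
  have key u : u != x -> u = s x.
    move=> ux; move: ux; have /porbitP[i ->] := tr' u.
    rewrite -(expg_mod i s2).
    have : i %% 2 < 2 by rewrite ltn_pmod.
    by case: (i %% 2) => [|[|]] //; rewrite expg0 perm1 eqxx.
  by move: yz; rewrite (key _ yx) (key _ zx) eqxx.
pose S3 := [set x; y; z].
pose L := x :: take m (enum (~: S3)).
have nin u : u \in S3 -> u \notin take m (enum (~: S3)).
  by move=> uin; apply/negP => /mem_take; rewrite mem_enum inE uin.
have uL : uniq L by rewrite /= take_uniq ?enum_uniq // andbT nin // !inE eqxx.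
have sL : size L = m.+1.
  rewrite /= size_takel // -cardE.
  have := cardsC S3.
  have -> : #|S3| = 3.
    by rewrite /S3 setUC cardsU1 cards2 !inE negb_or zx (eq_sym z y) yz (eq_sym x y) yx.
  lia.
have [s [hs _ fixL tr]] := trans_lemma HD Hth uL sL.
have yL : y \notin L by rewrite inE negb_or yx nin // !inE eqxx !orbT.
have zL : z \notin L by rewrite inE negb_or zx nin // !inE eqxx !orbT.
have /porbitP[i ->] := tr y z yL zL.
have sxi : (s ^+ i) x = x.
  by rewrite permX; elim: i => // i IH; rewrite iterS IH fixL // inE eqxx.
have /autP H := autX i hs.
by rewrite -{2}sxi H.
Qed.

Lemma const_iso (T : finType) (e : rel T) (esym : symmetric e) (eirr : irreflexive e)
  (step : forall x y z, y != x -> z != x -> e x y = e x z) :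
  isomorphic_to e (complete_rel #|T|) \/ isomorphic_to e (empty_rel #|T|).
Proof.
have es x y : e x y = e y x := esym x y.
have const a b c d : a != b -> c != d -> e a b = e c d.
  move=> ab cd; case: (eqVneq a d) => [ad|ad].
    subst d; rewrite es; case: (eqVneq b c) => [<-//|bc].
    have cb : c != b by rewrite eq_sym.
    have ac : a != c by rewrite eq_sym.
    by rewrite (step b a c) // es (step c b a).
  have ba : b != a by rewrite eq_sym.
  have da : d != a by rewrite eq_sym.
  have ad' : a != d by [].
  by rewrite (step a b d) // es (step d a c) // es.
have bij : bijective (@enum_rank T) by exists enum_val; [exact: enum_rankK | exact: enum_valK].
case: (boolP [exists x, exists y, e x y]) => [/existsP[x0 /existsP[y0 hxy]]|/existsPn H].
  left; exists enum_rank; split => // u v.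
  rewrite /complete_rel (inj_eq enum_rank_inj).
  case: (eqVneq u v) => [->|uv]; first by rewrite eirr.
  have x0y0 : x0 != y0 by apply/negP => /eqP xy; move: hxy; rewrite xy eirr.
  by rewrite (const u v x0 y0).
right; exists enum_rank; split => // u v.
by move: (H u); rewrite negb_exists => /forallP /(_ v) /negbTE.
Qed.

Lemma inj_dist (T : finType) (e : rel T) k (c : {ffun T -> 'I_k}) :
  injective c -> distinguishing e c.
Proof.
move=> ic; apply/distP => s _ hc; apply/permP => x; rewrite perm1; exact: ic.
Qed.

Lemma surj_inj (T : finType) k (c : {ffun T -> 'I_k}) :
  uses_all c -> #|T| <= k -> injective c.
Proof.
move=> /forallP uc hk.
have cs : c @: [set: T] = [set: 'I_k].
  apply/setP => i; rewrite !inE; have /existsP[x /eqP <-] := uc i.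
  by rewrite imset_f ?inE.
have /imset_injP ic : #|c @: [set: T]| == #|[set: T]|.
  rewrite cs !cardsT card_ord eqn_leq hk andbT.
  by have := leq_imset_card c [set: T]; rewrite cs !cardsT card_ord.
by move=> x y; apply: ic; rewrite inE.
Qed.

Lemma notdist (T : finType) (e : rel T) k (c : {ffun T -> 'I_k})
  (H : forall s, is_aut e s) x y : x != y -> c x = c y -> ~~ distinguishing e c.
Proof.
move=> xy cxy; apply/negP => /distP/(_ (tperm x y) (H _)) h.
have : tperm x y = 1 by apply: h => v; case: tpermP => [->|->|] //.
move/(congr1 (fun p : {perm T} => p x)); rewrite tpermL perm1 => yx.
by move: xy; rewrite yx eqxx.
Qed.

Lemma asym_eq (T : finType) (e : rel T) :
  asymmetric e -> dist_threshold e = dist_number e.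
Proof.
move=> H; rewrite /dist_threshold /dist_number.
have h1 : threshold_ok e 1%N.
  apply/andP; split => //; apply/forallP => c; apply/implyP => _.
  by apply/distP => s hs _; exact: H.
have h2 : has_dist_coloring e 1%N.
  apply/andP; split => //; apply/existsP; exists [ffun=> ord0].
  by apply/distP => s hs _; exact: H.
rewrite (ex_minn_eq _ h1) ?(ex_minn_eq _ h2) //; by case.
Qed.

Lemma allaut_eq (T : finType) (e : rel T) (H : forall s, is_aut e s) :
  dist_threshold e = dist_number e.
Proof.
case: (leqP #|T| 1) => [n1|n2].
  apply: asym_eq => s _; apply/permP => x; rewrite perm1.
  by move/card_le1_eqP: n1 => /(_ x (s x)) ->.
rewrite /dist_threshold /dist_number.
have hn : has_dist_coloring e #|T|.
  apply/andP; split; first lia.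
  apply/existsP; exists [ffun v => enum_rank v]; apply: inj_dist => x y.
  by rewrite !ffunE => /enum_rank_inj.
have tn : threshold_ok e #|T|.
  apply/andP; split; first lia.
  apply/forallP => c; apply/implyP => uc; apply: inj_dist; exact: surj_inj.
rewrite (ex_minn_eq _ tn) ?(ex_minn_eq _ hn) //.
  move=> k kn; apply/negP => /andP[_ /existsP[c hc]].
  have : ~~ injectiveb c.
    by apply/negP => /injectiveP ic; have := @leq_card _ _ c ic; rewrite card_ord; lia.
  by move/injectivePn => [x [y xy cxy]]; move: hc; apply/negP; exact: (notdist H xy cxy).
case=> [//|k] kn; apply/negP => /andP[_ /forallP /(_ [ffun v => inord (minn (enum_rank v) k)])].
have kn1 : k < #|T| by lia.
pose x := enum_val (Ordinal kn1); pose y := enum_val (Ordinal kn).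
move=> /implyP h.
have xy : x != y.
  apply/negP => /eqP/(congr1 (@enum_rank T)); rewrite !enum_valK.
  by move/(congr1 (@nat_of_ord _)) => /=; lia.
have cxy : [ffun v => inord (minn (enum_rank v) k) : 'I_k.+1] x =
           [ffun v => inord (minn (enum_rank v) k) : 'I_k.+1] y.
  apply/ord_inj; rewrite !ffunE !enum_valK /=; congr (nat_of_ord (inord _)); lia.
have := notdist H xy cxy; move/negP; apply; apply: h.
apply/forallP => i; apply/existsP.
have iT : i < #|T| by move: (ltn_ord i); lia.
exists (enum_val (Ordinal iT)); apply/eqP/ord_inj.
rewrite ffunE enum_valK /= inordK; move: (ltn_ord i); lia.
Qed.
Theorem mainTheorem7 (T : finType) (e : rel T)
  (e_sym : symmetric e) (e_irr : irreflexive e) :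
  dist_threshold e = dist_number e <->
  [\/ asymmetric e,
      isomorphic_to e (complete_rel #|T|)
    | isomorphic_to e (empty_rel #|T|)].
Proof.
split.
  rewrite /dist_threshold /dist_number.
  case: ex_minnP => kt Pt mint; case: ex_minnP => kd Pd mind Heq; subst kt.
  case/andP: (Pd) => kd0 _.
  case: kd kd0 Pt Pd mint mind => [//|[|m]] _ Pt Pd mint mind.
    apply: Or31 => s hs; case/andP: Pd => _ /existsP[c /distP]; apply => // x.
    by rewrite (ord1 (c (s x))) (ord1 (c x)).
  have HD (c : {ffun T -> 'I_m.+1}) : ~~ distinguishing e c.
    apply/negP => hc.
    have : has_dist_coloring e m.+1 by apply/andP; split => //; apply/existsP; exists c.
    by move/mind; rewrite ltnn.
  have Hth (c : {ffun T -> 'I_m.+2}) : uses_all c -> distinguishing e c.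
    by case/andP: Pt => _ /forallP H uc; exact: (implyP (H c) uc).
  have Hjn : m.+1 < #|T|.
    rewrite ltnNge; apply/negP => hk.
    have : ~~ threshold_ok e m.+1 by apply/negP => /mint; rewrite ltnn.
    rewrite /threshold_ok /= negb_forall => /existsP[c].
    rewrite negb_imply => /andP[uc /negP]; apply.
    by apply: inj_dist; exact: surj_inj.
  have step := step_lemma e_sym HD Hth Hjn.
  by case: (const_iso e_sym e_irr step) => ?; [apply: Or32|apply: Or33].
case=> [H|[f [bf hf]]|[f [bf hf]]].
- exact: asym_eq.
- apply: allaut_eq => s; apply/autP => x y.
  by rewrite !hf /complete_rel !(bij_eq bf) (inj_eq perm_inj).
- by apply: allaut_eq => s; apply/autP => x y; rewrite !hf.
Qed.
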